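(* For every integer $d\geq1$ and positive integer $k$, $\gamma_{gr}^{L,k}(Q_d)\leq 2^d-d+k$.
   Context: $Q_d$ is the $d$-dimensional hypercube: vertices are the $0$-$1$ strings of length $d$, adjacent iff they differ in exactly one position. For a vertex $v$, $N(v)$ is its open neighborhood and $N[v]=N(v)\cup\{v\}$. A sequence $S=(v_1,\ldots,v_m)$ of distinct vertices is a $k$-$L$-sequence if for each $i$ there is $u_i\in N[v_i]$ such that the number of indices $j<i$ with $u_i\in N(v_j)$ is less than $k$. $\gamma_{gr}^{L,k}(G)$ is the maximum length of a $k$-$L$-sequence of $G$. *)

(* Defs.v *)
From mathcomp Require Import all_boot.
Set Implicit Arguments. Unset Strict Implicit. Unset Printing Implicit Defensive.

(* Vertices of the hypercube Q_d : 0-1 strings of length d. *)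
Definition vert (d : nat) := {ffun 'I_d -> bool}.

Definition hadj (d : nat) (u v : vert d) : bool :=
  #|[set i : 'I_d | u i != v i]| == 1.

Definition nbh (d : nat) (v : vert d) : {set vert d} := [set u | hadj v u].
Definition cnbh (d : nat) (v : vert d) : {set vert d} := v |: nbh v.

Definition kLseq (d k : nat) (S : seq (vert d)) : Prop :=
  uniq S /\
  forall i, i < size S ->
    exists2 u, u \in cnbh (nth [ffun => false] S i) &
      count (fun w => u \in nbh w) (take i S) < k.

(* gamma_gr^{L,k}(Q_d) <= b  iff every k-L-sequence has length <= b *)
Definition gamma_grLk_le (d k b : nat) : Prop :=
  forall S : seq (vert d), kLseq k S -> size S <= b.

(* Main.v *)
Require Import Defs.
From mathcomp Require Import all_boot.
Set Implicit Arguments. Unset Strict Implicit.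

Definition flip (d : nat) (u : vert d) (i : 'I_d) : vert d :=
  [ffun j => if j == i then ~~ u j else u j].

Lemma flip_inj d (u : vert d) : injective (flip u).
Proof.
move=> i i' /ffunP /(_ i); rewrite !ffunE eqxx.
case: eqP => [->//|_]; by case: (u i).
Qed.

Lemma flip_adj d (u : vert d) i : u \in nbh (flip u i).
Proof.
rewrite inE /hadj.
have -> : [set j | flip u i j != u j] = [set i].
  apply/setP => j; rewrite !inE ffunE.
  by have [->|_] := eqVneq j i; [case: (u i)|rewrite eqxx].
by rewrite cards1.
Qed.

Theorem mainTheorem12 (d k : nat) (hd : 1 <= d) (hk : 0 < k) :
  forall S : seq (vert d), kLseq k S -> size S <= 2 ^ d - d + k.
Proof.
move=> S [uS HS].
case E: (size S) => [|m]; first by [].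
have [u _ Hc] : exists2 u, u \in cnbh (nth [ffun => false] S m) & count (fun w => u \in nbh w) (take m S) < k by apply: HS; rewrite E.
set P := [pred w : vert d | u \in nbh w] in Hc.
have HT : #|vert d| = 2 ^ d by rewrite card_ffun card_bool card_ord.
have HP : d <= #|P|.
  have Hd : #|[set flip u i | i : 'I_d]| = d.
    by rewrite card_imset ?card_ord //; apply: flip_inj.
  rewrite -{1}Hd; apply: subset_leq_card; apply/subsetP => w /imsetP [i _ ->].
  by rewrite inE /= flip_adj.
have HC : count (predC P) (take m S) <= #|predC P|.
  rewrite -size_filter cardE; apply: uniq_leq_size.
    by apply: filter_uniq; apply: take_uniq.
  by move=> w; rewrite mem_filter mem_enum => /andP [].
have HCP : #|predC P| = 2 ^ d - #|P|.
  by rewrite -HT -(cardC P) addKn.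
have Hsz : size (take m S) = m by rewrite size_take E ltnSn.
have := count_predC P (take m S); rewrite Hsz => Hm.
have H2 : d <= 2 ^ d by apply: ltnW; apply: ltn_expl.
have HPT : #|P| <= 2 ^ d by rewrite -HT max_card.
rewrite HCP in HC.
apply: (@leq_trans ((count P (take m S)).+1 + count (predC P) (take m S))).
  by rewrite addSn Hm.
apply: (@leq_trans (k + (2 ^ d - d))).
  apply: leq_add => //. apply: (leq_trans HC). by apply: leq_sub2l.
by rewrite addnC addnBAC.
Qed.
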